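(* Let $\mathcal H$ be an infinite-dimensional complex Hilbert space and let $\mathcal V_f(\mathcal H)$ be the set of all positive bilinear forms $t$ on $\mathcal H$ with dense domain $D(t)$ such that $D(t)=\mathcal H$ whenever $t$ is bounded. For $t,s\in\mathcal V_f(\mathcal H)$, let $t\oplus s$ be defined if and only if $t$ is bounded, or $s$ is bounded, or $D(t)=D(s)$, and in that case $t\oplus s=t+s$. Then $(\mathcal V_f(\mathcal H);\oplus,o)$ is a generalized effect algebra.
   Context: The inner product is linear in the first argument. A bilinear form $t$ on $\mathcal H$ is a map $t:D(t)\times D(t)\to\mathbb C$, $D(t)$ a dense linear subspace, linear in the first and antilinear in the second argument. $t$ is positive if $t(x,x)\ge0$ for all $x\in D(t)$; bounded if $\sup\{t(x,x)\mid x\in D(t),\|x\|=1\}<\infty$, unbounded otherwise. The sum $t+s$ has domain $D(t)\cap D(s)$ and $(t+s)(x,y)=t(x,y)+s(x,y)$. $o$ denotes the zero form with domain $\mathcal H$. A generalized effect algebra is a structure $(E;\oplus,0)$ with $0\in E$ and a partial binary operation $\oplus$ such that for all $x,y,z\in E$: (i) $x\oplus y=y\oplus x$ if one side is defined; (ii) $(x\oplus y)\oplus z=x\oplus(y\oplus z)$ if one side is defined; (iii) $x\oplus 0$ is defined and equals $x$; (iv) $x\oplus y=x\oplus z$ implies $y=z$; (v) $x\oplus y=0$ implies $x=y=0$. *)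

(* Defs.v *)
From mathcomp Require Import all_boot all_order all_algebra.
From mathcomp Require Import boolp classical_sets reals.
From mathcomp.real_closed Require Import complex.
Set Implicit Arguments. Unset Strict Implicit. Unset Printing Implicit Defensive.
Import Order.TTheory GRing.Theory Num.Theory.
Local Open Scope ring_scope.
Local Open Scope classical_set_scope.
Local Open Scope complex_scope.

(* Generalized effect algebra on a carrier set E of a type T, with partial
   operation given by a definedness relation [defd] and the value [op x y]
   (meaningful only when [defd x y]), and distinguished element [zero]. *)
Definition gen_effect_algebra {T : Type} (E : set T) (defd : T -> T -> Prop)
  (op : T -> T -> T) (zero : T) : Prop :=
  E zero /\
  (forall x y, E x -> E y -> defd x y -> E (op x y)) /\
  (forall x y, E x -> E y -> defd x y -> defd y x /\ op x y = op y x) /\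
  (forall x y z, E x -> E y -> E z ->
     (defd x y /\ defd (op x y) z) \/ (defd y z /\ defd x (op y z)) ->
     defd x y /\ defd (op x y) z /\ defd y z /\ defd x (op y z) /\
     op (op x y) z = op x (op y z)) /\
  (forall x, E x -> defd x zero /\ op x zero = x) /\
  (forall x y z, E x -> E y -> E z -> defd x y -> defd x z ->
     op x y = op x z -> y = z) /\
  (forall x y, E x -> E y -> defd x y -> op x y = zero -> x = zero /\ y = zero).

Section Hilbert.
Variables (R : realType) (V : lmodType R[i]) (ip : V -> V -> R[i]).

Definition hnorm (x : V) : R := Num.sqrt (complex.Re (ip x x)).

Definition inner_product : Prop :=
  (forall (a : R[i]) x y z, ip (a *: x + y) z = a * ip x z + ip y z) /\
  (forall x y, ip y x = (ip x y)^*) /\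
  (forall x, 0 <= ip x x) /\
  (forall x, ip x x = 0 -> x = 0).

Definition complete : Prop :=
  forall u : nat -> V,
    (forall e : R, 0 < e -> exists N, forall m n, (N <= m)%N -> (N <= n)%N ->
        hnorm (u m - u n) < e) ->
    exists l : V, forall e : R, 0 < e -> exists N, forall n, (N <= n)%N ->
        hnorm (u n - l) < e.

Definition infinite_dimensional : Prop :=
  forall n : nat, exists v : 'I_n -> V,
    forall c : 'I_n -> R[i], \sum_(i < n) c i *: v i = 0 -> forall i, c i = 0.

Definition inf_dim_complex_hilbert : Prop :=
  inner_product /\ complete /\ infinite_dimensional.

(* Convention: the
   value is 0 whenever an argument lies outside the domain, so that Leibniz
   equality of forms is equality of domains and of values on the domain. *)
Record form := Form { fdom : set V; fval : V -> V -> R[i] }.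

Definition dense (D : set V) : Prop :=
  forall x (e : R), 0 < e -> exists2 y, D y & hnorm (x - y) < e.

Definition subspace (D : set V) : Prop :=
  D 0 /\ (forall (a : R[i]) x y, D x -> D y -> D (a *: x + y)).

(* bilinear form in the sense of the paper (sesquilinear on a dense domain) *)
Definition is_form (t : form) : Prop :=
  subspace (fdom t) /\ dense (fdom t) /\
  (forall (a : R[i]) x y z, fdom t x -> fdom t y -> fdom t z ->
     fval t (a *: x + y) z = a * fval t x z + fval t y z) /\
  (forall (a : R[i]) x y z, fdom t x -> fdom t y -> fdom t z ->
     fval t x (a *: y + z) = (a^*) * fval t x y + fval t x z) /\
  (forall x y, ~ (fdom t x /\ fdom t y) -> fval t x y = 0).

Definition positive_form (t : form) : Prop :=
  forall x, fdom t x -> 0 <= fval t x x.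

Definition bounded_form (t : form) : Prop :=
  exists M : R, forall x, fdom t x -> hnorm x = 1 -> complex.Re (fval t x x) <= M.

Definition Vf : set form :=
  [set t | is_form t /\ positive_form t /\ (bounded_form t -> fdom t = setT)].

Definition form_add (t s : form) : form :=
  Form (fdom t `&` fdom s)
    (fun x y => if `[< (fdom t `&` fdom s) x /\ (fdom t `&` fdom s) y >]
                then fval t x y + fval s x y else 0).

Definition zero_form : form := Form setT (fun _ _ => 0).

Definition oplus_defined (t s : form) : Prop :=
  bounded_form t \/ bounded_form s \/ fdom t = fdom s.

End Hilbert.

(* Main.v *)
Require Import Defs.
From mathcomp Require Import all_boot all_order all_algebra.
From mathcomp Require Import boolp classical_sets reals.
From mathcomp.real_closed Require Import complex.
From mathcomp Require Import ring lra.
Set Implicit Arguments. Unset Strict Implicit. Unset Printing Implicit Defensive.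
Import Order.TTheory GRing.Theory Num.Theory.
Local Open Scope ring_scope.
Local Open Scope classical_set_scope.
Local Open Scope complex_scope.

Section Aux.
Variables (R : realType) (V : lmodType R[i]).
Notation CRe := (@complex.Re R).

Lemma ReD (x y : R[i]) : CRe (x + y) = CRe x + CRe y.
Proof. by case: x => ? ?; case: y => ? ?. Qed.
Lemma ReM (k : R) (x : R[i]) : CRe (k%:C * x) = k * CRe x.
Proof. case: x => a b /=. simpc. by []. Qed.
Lemma Re0 : CRe 0 = 0. Proof. by []. Qed.
Lemma ge0_Re (z : R[i]) : 0 <= z -> 0 <= CRe z.
Proof. by case: z => a b; rewrite lecE /= => /andP[_]. Qed.
Lemma ge0_real (z : R[i]) : 0 <= z -> z = (CRe z)%:C.
Proof. by case: z => a b; rewrite lecE /= => /andP[/eqP -> _]. Qed.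
Lemma conjD (x y : R[i]) : (x + y)^* = x^* + y^*.
Proof. exact: rmorphD. Qed.
Lemma conjM (x y : R[i]) : (x * y)^* = x^* * y^*.
Proof. exact: rmorphM. Qed.
Lemma conjK (x : R[i]) : x^*^* = x.
Proof. exact: conjcK. Qed.
Lemma nconj (z : R[i]) : Num.conj z = conjc z. Proof. by case: z. Qed.
Lemma conj_i : Num.conj ('i : R[i]) = - 'i.
Proof. by rewrite nconj; apply/eqP; rewrite eq_complex /= oppr0 !eqxx. Qed.
Lemma i_neq0 : ('i : R[i]) != 0.
Proof. by rewrite eq_complex /= oner_eq0 andbF. Qed.
Lemma conj_real (k : R) : Num.conj (k%:C) = k%:C.
Proof. by rewrite nconj; apply/eqP; rewrite eq_complex /= oppr0 !eqxx. Qed.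
Lemma padd_eq0l (x y : R[i]) : 0 <= x -> 0 <= y -> x + y = 0 -> x = 0.
Proof. move=> a b c. move/eqP: c. by rewrite paddr_eq0 // => /andP[/eqP]. Qed.

Definition sesq (f : V -> V -> R[i]) :=
  (forall (a : R[i]) x y z, f (a *: x + y) z = a * f x z + f y z) /\
  (forall (a : R[i]) x y z, f x (a *: y + z) = Num.conj a * f x y + f x z).

Section Sesq.
Variables (f : V -> V -> R[i]) (Hf : sesq f).
Lemma sq0l z : f 0 z = 0.
Proof.
have := Hf.1 1 0 0 z; rewrite scale1r addr0 mul1r => h.
by apply: (@addrI _ (f 0 z)); rewrite addr0 -h.
Qed.
Lemma sq0r z : f z 0 = 0.
Proof.
have := Hf.2 1 z 0 0; rewrite scale1r addr0 rmorph1 mul1r => h.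
by apply: (@addrI _ (f z 0)); rewrite addr0 -h.
Qed.
Lemma sqDl x y z : f (x + y) z = f x z + f y z.
Proof. by have := Hf.1 1 x y z; rewrite scale1r mul1r. Qed.
Lemma sqDr x y z : f z (x + y) = f z x + f z y.
Proof. by have := Hf.2 1 z x y; rewrite scale1r rmorph1 mul1r. Qed.
Lemma sqZl a x z : f (a *: x) z = a * f x z.
Proof. by have := Hf.1 a x 0 z; rewrite addr0 sq0l addr0. Qed.
Lemma sqZr a x z : f z (a *: x) = Num.conj a * f z x.
Proof. by have := Hf.2 a z x 0; rewrite addr0 sq0r addr0. Qed.
Lemma sqZZ a x : f (a *: x) (a *: x) = a * Num.conj a * f x x.
Proof. by rewrite sqZl sqZr mulrA. Qed.
Lemma sqZZr (k : R) x : f (k%:C *: x) (k%:C *: x) = k%:C * (k%:C * f x x).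
Proof. by rewrite sqZl sqZr conj_real. Qed.
Lemma sq_exp (l e : R) y d :
  f (l%:C *: y + e%:C *: d) (l%:C *: y + e%:C *: d) =
  l%:C * (l%:C * f y y) + l%:C * (e%:C * (f y d + f d y)) + e%:C * (e%:C * f d d).
Proof.
rewrite sqDl !sqDr !sqZl !sqZr.
rewrite !conj_real.
ring. Qed.
Lemma sq_expRe (l e : R) y d :
  CRe (f (l%:C *: y + e%:C *: d) (l%:C *: y + e%:C *: d)) =
  l * (l * CRe (f y y)) + l * (e * CRe (f y d + f d y)) + e * (e * CRe (f d d)).
Proof. by rewrite sq_exp !ReD !ReM !ReD. Qed.
Lemma sq_polar : (forall x, f x x = 0) -> forall x y, f x y = 0.
Proof.
move=> H x y.
have h1 := H (x + y); rewrite sqDl !sqDr !H add0r addr0 in h1.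
have h2 := H (x + 'i *: y); rewrite sqDl !sqDr !sqZl !sqZr !H conj_i in h2.
have e1 : f y x = - f x y by apply/eqP; rewrite -addr_eq0 addrC h1.
rewrite e1 !mulr0 addr0 add0r in h2.
have : (- (2%:R * 'i)) * f x y = 0.
  by rewrite -h2; ring.
move/eqP; rewrite mulf_eq0 => /orP[|/eqP //].
by rewrite oppr_eq0 mulf_eq0 pnatr_eq0 /= (negbTE i_neq0).
Qed.
End Sesq.
End Aux.

Section Forms.
Variables (R : realType) (V : lmodType R[i]) (ip : V -> V -> R[i]).
Notation CRe := (@complex.Re R).
Notation form := (@Defs.form R V).
Implicit Types t s r : form.

Lemma form_eq t s : fdom t = fdom s -> (forall x y, fval t x y = fval s x y) -> t = s.
Proof.
case: t => Dt ft; case: s => Ds fs /= -> h; congr Form.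
by apply/funext => x; apply/funext => y.
Qed.

Lemma add_in t s x y : fdom t x -> fdom s x -> fdom t y -> fdom s y ->
  fval (form_add t s) x y = fval t x y + fval s x y.
Proof. by move=> *; rewrite /= asboolT. Qed.

Lemma add_out t s x y : ~ (fdom t x /\ fdom s x /\ fdom t y /\ fdom s y) ->
  fval (form_add t s) x y = 0.
Proof. by move=> h; rewrite /= asboolF // => -[[a b] [c d]]; apply: h. Qed.

Lemma form_addC t s : form_add t s = form_add s t.
Proof.
apply: form_eq; first by rewrite /= setIC.
move=> x y.
have [h|h] := pselect (fdom t x /\ fdom s x /\ fdom t y /\ fdom s y).
  by case: h => a [b [c d]]; rewrite !add_in // addrC.
rewrite !add_out //; first by move=> [a [b [c d]]]; apply: h.
Qed.

Lemma form_addA t s r : form_add (form_add t s) r = form_add t (form_add s r).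
Proof.
apply: form_eq; first by rewrite /= setIA.
move=> x y.
have [h|h] := pselect (fdom t x /\ fdom s x /\ fdom r x /\ fdom t y /\ fdom s y /\ fdom r y).
  case: h => a [b [c [d [e f]]]].
  by rewrite /= !asboolT ?addrA //; repeat split.
rewrite !add_out //.
  by move=> [a [[b c] [d [e f]]]]; apply: h.
by move=> [[a b] [c [[d e] f]]]; apply: h.
Qed.

Lemma out_dom t x y : is_form ip t -> ~ (fdom t x /\ fdom t y) -> fval t x y = 0.
Proof. by case=> _ [_ [_ [_ h]]]; apply: h. Qed.

Lemma add_zero t : is_form ip t -> form_add t (zero_form V) = t.
Proof.
move=> ht; apply: form_eq; first by rewrite /= setIT.
move=> x y.
have [h|h] := pselect (fdom t x /\ fdom t y).
  by case: h => a b; rewrite add_in // addr0.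
rewrite add_out; last by move=> [a [_ [b _]]]; apply: h.
by rewrite out_dom.
Qed.

Lemma form_sesq t : is_form ip t -> fdom t = setT -> sesq (fval t).
Proof.
case=> _ [_ [h1 [h2 _]]] ft; split=> a x y z.
  by apply: h1; rewrite ft.
by apply: h2; rewrite ft.
Qed.

Lemma pos_ge0 t x : positive_form t -> fdom t x -> 0 <= CRe (fval t x x).
Proof. by move=> h /h; apply: ge0_Re. Qed.

Lemma bounded_add t s : bounded_form ip t -> bounded_form ip s -> bounded_form ip (form_add t s).
Proof.
move=> [M1 h1] [M2 h2]; exists (M1 + M2) => x [xt xs] hx.
rewrite add_in // ReD; apply: lerD; [exact: h1|exact: h2].
Qed.

Lemma bounded_part t s : positive_form t -> (fdom t = setT \/ fdom t = fdom s) ->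
  bounded_form ip (form_add t s) -> bounded_form ip s.
Proof.
move=> pt hd [M h]; exists M => x xs hx.
have xt : fdom t x by case: hd => ->.
have := h x (conj xt xs) hx; rewrite add_in // ReD.
have := pos_ge0 pt xt; lra.
Qed.

Lemma is_form_add t s : is_form ip t -> is_form ip s -> dense ip (fdom t `&` fdom s) ->
  is_form ip (form_add t s).
Proof.
move=> ht hs hd.
case: (ht) => [[t0 tS] [_ [t1 [t2 _]]]]; case: (hs) => [[s0 sS] [_ [s1 [s2 _]]]].
split; first split.
- by split.
- by move=> a x y [xt xs] [yt ys]; split; [apply: tS|apply: sS].
split => //; split.
  move=> a x y z [xt xs] [yt ys] [zt zs].
  rewrite !add_in //; try (apply: tS || apply: sS) => //.
  by rewrite t1 // s1 //; ring.
split.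
  move=> a x y z [xt xs] [yt ys] [zt zs].
  rewrite !add_in //; try (apply: tS || apply: sS) => //.
  by rewrite t2 // s2 //; ring.
move=> x y h; apply: add_out => -[a [b [c d]]]; apply: h; split; by split.
Qed.

End Forms.

Lemma lim_le (R : realType) (a b c : R) : 0 <= c ->
  (forall e, 0 < e -> a <= c * e + b) -> a <= b.
Proof.
move=> hc h; rewrite leNgt; apply/negP => hab.
have hc1 : 0 < c + 1 by lra.
set e := (a - b) / (2 * (c + 1)).
have he : 0 < e by apply: divr_gt0; lra.
have h1 := h e he.
have h2 : (c + 1) * e = (a - b) / 2.
  by rewrite /e; field; rewrite gt_eqF.
have h3 : c * e <= (c + 1) * e by rewrite ler_wpM2r; lra.
lra.
Qed.

Lemma real_bound (R : realType) (X Y D b l m : R) : 0 < l -> m * l = 1 -> 0 < m -> 0 <= D ->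
  X = Y + D + b ->
  0 <= l * (l * Y) + l * (-1 * b) + -1 * (-1 * D) ->
  0 <= l * (l * Y) + l * (1 * b) + 1 * (1 * D) ->
  0 <= 1 * (1 * Y) + 1 * (2 * b) + 2 * (2 * D) ->
  `|X - Y| <= (1 + 2 * l + m) * D + 2 * l * X.
Proof.
move=> hl hm hm0 hD hX P1 P2 P3.
have Q1 : b <= l * Y + m * D.
  have := mulr_ge0 (ltW hm0) P1.
  have -> : m * (l * (l * Y) + l * (-1 * b) + -1 * (-1 * D)) =
     (m * l) * (l * Y - b) + m * D by ring.
  rewrite hm mul1r; lra.
have Q2 : - b <= l * Y + m * D.
  have := mulr_ge0 (ltW hm0) P2.
  have -> : m * (l * (l * Y) + l * (1 * b) + 1 * (1 * D)) =
     (m * l) * (l * Y + b) + m * D by ring.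
  rewrite hm mul1r; lra.
have Q3 : Y <= 2 * X + 2 * D by lra.
have Q4 : l * Y <= l * (2 * X + 2 * D) by rewrite ler_wpM2l //; lra.
have Q5 : 0 <= l * D by apply: mulr_ge0; lra.
have E : (1 + 2 * l + m) * D + 2 * l * X = D + 2 * (l * D) + m * D + l * (2 * X + 2 * D) - 2 * (l * D) by ring.
rewrite E ler_norml; apply/andP; split; lra.
Qed.

Section Analytic.
Variables (R : realType) (V : lmodType R[i]) (ip : V -> V -> R[i]).
Hypothesis hip : inner_product ip.
Notation CRe := (@complex.Re R).
Notation form := (@Defs.form R V).
Implicit Types t s r : form.

Lemma ip_sym x y : ip y x = Num.conj (ip x y).
Proof. by rewrite nconj; case: hip => _ [h _]; apply: h. Qed.

Lemma ip_sesq : sesq ip.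
Proof.
case: hip => h1 _; split; first exact: h1.
move=> a x y z; rewrite ip_sym h1 rmorphD rmorphM (ip_sym y x) (ip_sym z x) //.
Qed.

Lemma n_ge0 x : 0 <= CRe (ip x x).
Proof. by case: hip => _ [_ [h _]]; apply: ge0_Re. Qed.

Lemma hnormE x : hnorm ip x = Num.sqrt (CRe (ip x x)).
Proof. by []. Qed.

Lemma bound_q s : is_form ip s -> fdom s = setT -> bounded_form ip s ->
  exists M, 0 <= M /\ forall d, CRe (fval s d d) <= M * CRe (ip d d).
Proof.
move=> hs fs [M0 hM]; exists `|M0|; split => // d.
have Ss := form_sesq hs fs.
suff h : CRe (fval s d d) <= M0 * CRe (ip d d).
  apply: (le_trans h); apply: ler_wpM2r; [exact: n_ge0 | exact: ler_norm].
set h := hnorm ip d.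
have hh : h ^+ 2 = CRe (ip d d) by rewrite /h hnormE sqr_sqrtr // n_ge0.
have [h0|hp] := eqVneq h 0.
  have n0 : CRe (ip d d) = 0 by rewrite -hh h0 expr0n.
  have : ip d d = 0.
    by rewrite (ge0_real (hip.2.2.1 d)) n0.
  move/(hip.2.2.2) => ->.
  by rewrite sq0l // (sq0l ip_sesq) /= mulr0.
have hpos : 0 < h by rewrite lt_def hp /h hnormE sqrtr_ge0.
set k := h^-1.
have hk : k * h = 1 by rewrite /k mulVf.
set u := (k%:C) *: d.
have nu : CRe (ip u u) = 1.
  rewrite /u (sqZZr ip_sesq) !ReM -hh.
  rewrite expr2; have -> : k * (k * (h * h)) = (k * h) * (k * h) by ring.
  by rewrite hk mulr1.
have hu : hnorm ip u = 1 by rewrite hnormE nu sqrtr1.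
have us : fdom s u by rewrite fs.
have := hM u us hu.
rewrite /u (sqZZr Ss) !ReM => hq.
rewrite -hh expr2.
have -> : CRe (fval s d d) = (h * h) * (k * (k * CRe (fval s d d))).
  have -> : (h * h) * (k * (k * CRe (fval s d d))) = (k * h) * (k * h) * CRe (fval s d d) by ring.
  by rewrite hk !mul1r.
have := ler_wpM2l (mulr_ge0 (ltW hpos) (ltW hpos)) hq.
by rewrite [M0 * _]mulrC.
Qed.

Lemma diff_bound (f : V -> V -> R[i]) : sesq f -> (forall v, 0 <= CRe (f v v)) ->
  forall y d (l : R), 0 < l ->
  `|CRe (f (y + d) (y + d)) - CRe (f y y)| <=
    (1 + 2 * l + l^-1) * CRe (f d d) + 2 * l * CRe (f (y + d) (y + d)).
Proof.
move=> Hs Hp y d l hl.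
have hX : CRe (f (y + d) (y + d)) =
   CRe (f y y) + CRe (f d d) + (CRe (f y d) + CRe (f d y)).
  rewrite (sqDl Hs) !(sqDr Hs) !ReD.
  set A1 := CRe (f y y); set A2 := CRe (f y d); set A3 := CRe (f d y); set A4 := CRe (f d d).
  lra.
have P := fun a e => Hp (a%:C *: y + e%:C *: d).
have P1 := P l (-1); rewrite (sq_expRe Hs) ReD in P1.
have P2 := P l 1; rewrite (sq_expRe Hs) ReD in P2.
have P3 := P 1 2; rewrite (sq_expRe Hs) ReD in P3.
apply: real_bound hX P1 P2 P3 => //.
- by rewrite mulVf // gt_eqF.
- by rewrite invr_gt0.
Qed.

Lemma ext_eq s r (A : set V) : is_form ip s -> is_form ip r ->
  positive_form s -> positive_form r -> fdom s = setT -> fdom r = setT ->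
  bounded_form ip s -> bounded_form ip r -> dense ip A ->
  (forall x y, A x -> A y -> fval s x y = fval r x y) -> s = r.
Proof.
move=> hs hr ps pr fs fr bs br hd hA.
have Ss := form_sesq hs fs; have Sr := form_sesq hr fr.
have ps' : forall v, 0 <= CRe (fval s v v) by move=> v; apply: pos_ge0; rewrite ?fs.
have pr' : forall v, 0 <= CRe (fval r v v) by move=> v; apply: pos_ge0; rewrite ?fr.
have [Ms [Ms0 hMs]] := bound_q hs fs bs.
have [Mr [Mr0 hMr]] := bound_q hr fr br.
have diag : forall x, CRe (fval s x x) = CRe (fval r x x).
  move=> x.
  suff : `|CRe (fval s x x) - CRe (fval r x x)| <= 0.
    by rewrite normr_le0 subr_eq0 => /eqP.
  apply: (@lim_le _ _ _ (2 * (CRe (fval s x x) + CRe (fval r x x)))).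
    by have := ps' x; have := pr' x; lra.
  move=> l hl; rewrite addr0.
  have hli : 0 < l^-1 by rewrite invr_gt0.
  have hc0 : 0 <= 1 + 2 * l + l^-1 by lra.
  apply: (@lim_le _ _ _ (1 + 2 * l + l^-1)) => // eta heta.
  set K := Ms + Mr + 1.
  have hK : 0 < K by rewrite /K; lra.
  have hek : 0 < eta / K by apply: divr_gt0.
  have hsq : 0 < Num.sqrt (eta / K) by rewrite sqrtr_gt0.
  have [y Ay hy] := hd x (Num.sqrt (eta / K)) hsq.
  set d := x - y.
  have hx : y + d = x by rewrite /d addrC subrK.
  have nd0 := n_ge0 d.
  have hnd : CRe (ip d d) < eta / K.
    by move: hy; rewrite hnormE ltr_sqrt.
  have hnd' : CRe (ip d d) * K < eta by rewrite -ltr_pdivlMr.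
  have hDs := hMs d; have hDr := hMr d.
  have hDsr : CRe (fval s d d) + CRe (fval r d d) <= eta.
    have : (Ms + Mr) * CRe (ip d d) <= K * CRe (ip d d).
      by rewrite ler_wpM2r //; rewrite /K; lra.
    lra.
  have hY : fval s y y = fval r y y by apply: hA.
  have Bs := diff_bound Ss ps' y d hl; have Br := diff_bound Sr pr' y d hl.
  rewrite hx hY in Bs; rewrite hx in Br.
  have T := ler_normB (CRe (fval s x x) - CRe (fval r y y)) (CRe (fval r x x) - CRe (fval r y y)).
  have -> : CRe (fval s x x) - CRe (fval r x x) =
     (CRe (fval s x x) - CRe (fval r y y)) - (CRe (fval r x x) - CRe (fval r y y)) by ring.
  have := ler_wpM2l hc0 hDsr.
  move: T Bs Br; set c := 1 + 2 * l + l^-1; lra.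
apply: form_eq; first by rewrite fs fr.
pose w x y := fval s x y - fval r x y.
have Sw : sesq w.
  split=> a x y z; rewrite /w ?Ss.1 ?Sr.1 ?Ss.2 ?Sr.2; ring.
have w0 : forall x, w x x = 0.
  move=> x; rewrite /w (ge0_real (ps x _)) ?fs // (ge0_real (pr x _)) ?fr //.
  by rewrite diag subrr.
move=> x y; apply/eqP; rewrite -subr_eq0; apply/eqP.
exact: (sq_polar Sw w0).
Qed.

End Analytic.

Section Main.
Variables (R : realType) (V : lmodType R[i]) (ip : V -> V -> R[i]).
Hypothesis hip : inner_product ip.
Notation CRe := (@complex.Re R).
Notation form := (@Defs.form R V).
Implicit Types t s r : form.
Notation B := (bounded_form ip).
Notation dd := (oplus_defined ip).

Lemma zero_Vf : Vf ip (zero_form V).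
Proof.
split; last by split => // x _ /=.
split; first by split.
split.
  move=> x e he; exists x => //.
  by rewrite subrr hnormE (sq0l (ip_sesq hip)) Re0 sqrtr0.
split; first by move=> *; rewrite /= mulr0 addr0.
split; first by move=> *; rewrite /= mulr0 addr0.
by move=> x y h; exfalso; apply: h.
Qed.

Lemma bounded_zero : B (zero_form V).
Proof. by exists 0 => x _ _; rewrite Re0. Qed.

Lemma dd_sym t s : dd t s -> dd s t.
Proof. by case=> [h|[h|h]]; [right; left|left|right; right]. Qed.

Lemma closure t s : Vf ip t -> Vf ip s -> dd t s -> Vf ip (form_add t s).
Proof.
move=> [ht [pt bt]] [hs [ps bs]] d.
have hBB : B (form_add t s) -> B t /\ B s.
  move=> Bts; case: d => [Bt|[Bs|Ets]].
  - by split => //; apply: bounded_part pt (or_introl (bt Bt)) Bts.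
  - split => //; apply: bounded_part ps (or_introl (bs Bs)) _.
    by rewrite form_addC.
  - have Bs := bounded_part pt (or_intror Ets) Bts.
    split => //; apply: bounded_part ps (or_intror (esym Ets)) _.
    by rewrite form_addC.
split.
  apply: is_form_add => //.
  case: d => [/bt ->|[/bs ->|->]].
  - by rewrite setTI; case: hs => _ [].
  - by rewrite setIT; case: ht => _ [].
  - by rewrite setIid; case: hs => _ [].
split.
  move=> x [xt xs]; rewrite add_in //; apply: addr_ge0; [exact: pt|exact: ps].
by move=> /hBB [/bt ft /bs fs]; rewrite /= ft fs setIT.
Qed.

Lemma assoc1 t s r : Vf ip t -> Vf ip s -> Vf ip r ->
  dd t s -> dd (form_add t s) r -> dd s r /\ dd t (form_add s r).
Proof.
move=> [ht [pt bt]] [hs [ps bs]] [hr [pr br]] dts dr.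
case: dts => [Bt|[Bs|Ets]].
- have ft := bt Bt.
  case: dr => [Bts|[Br|Etr]].
  + have Bs := bounded_part pt (or_introl ft) Bts.
    by split; left.
  + by split; [right; left|left].
  + rewrite /= ft setTI in Etr.
    by split; [right; right|left].
- have fs := bs Bs.
  case: dr => [Bts|[Br|Etr]].
  + have Bt : B t.
      by apply: bounded_part ps (or_introl fs) _; rewrite form_addC.
    by split; left.
  + split; [right; left|right; left] => //.
    exact: bounded_add.
  + rewrite /= fs setIT in Etr.
    split; [left|right; right] => //.
    by rewrite /= fs setTI.
- case: dr => [Bts|[Br|Etr]].
  + have Bs := bounded_part pt (or_intror Ets) Bts.
    have Bt : B t.
      by apply: bounded_part ps (or_intror (esym Ets)) _; rewrite form_addC.
    by split; left.
  + have fr := br Br.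
    split; [right; left|right; right] => //.
    by rewrite /= fr setIT.
  + rewrite /= -Ets setIid in Etr.
    split; right; right.
    * by rewrite -Ets.
    * by rewrite /= -Etr -Ets setIid.
Qed.

Lemma cancel_core t s r : Vf ip t -> Vf ip s -> Vf ip r ->
  (B s \/ fdom s = fdom t) -> (B r \/ fdom r = fdom t) ->
  (forall a b, fdom t a -> fdom t b -> fdom s a -> fdom s b -> fdom r a -> fdom r b ->
     fval s a b = fval r a b) -> s = r.
Proof.
move=> [ht [pt bt]] [hs [ps bs]] [hr [pr br]] hs' hr' hag.
have dt : dense ip (fdom t) by case: ht => _ [].
case: hs' => [Bs|Es]; case: hr' => [Br|Er].
- have fs := bs Bs; have fr := br Br.
  apply: (ext_eq hip hs hr ps pr fs fr Bs Br dt).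
  by move=> a b ta tb; apply: hag; rewrite ?fs ?fr.
- have fs := bs Bs.
  have Br : B r.
    case: Bs => M hM; exists M => x xr hx.
    have xt : fdom t x by rewrite -Er.
    by rewrite -hag ?fs //; apply: hM; rewrite ?fs.
  have fr := br Br.
  apply: (ext_eq hip hs hr ps pr fs fr Bs Br dt).
  by move=> a b ta tb; apply: hag; rewrite ?fs ?fr.
- have fr := br Br.
  have Bs : B s.
    case: Br => M hM; exists M => x xs hx.
    have xt : fdom t x by rewrite -Es.
    by rewrite hag ?fr //; apply: hM; rewrite ?fr.
  have fs := bs Bs.
  apply: (ext_eq hip hs hr ps pr fs fr Bs Br dt).
  by move=> a b ta tb; apply: hag; rewrite ?fs ?fr.
- apply: form_eq; first by rewrite Es Er.
  move=> a b.
  have [[ta tb]|h] := pselect (fdom t a /\ fdom t b).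
    by apply: hag; rewrite ?Es ?Er.
  rewrite (@out_dom _ _ ip s a b hs); last by rewrite Es.
  by rewrite (@out_dom _ _ ip r a b hr) // Er.
Qed.

Lemma cancel t s r : Vf ip t -> Vf ip s -> Vf ip r -> dd t s -> dd t r ->
  form_add t s = form_add t r -> s = r.
Proof.
move=> Vt Vs Vr dts dtr E.
have Edom : fdom t `&` fdom s = fdom t `&` fdom r by have := congr1 (@fdom R V) E.
have Eval : forall a b, fval (form_add t s) a b = fval (form_add t r) a b by rewrite E.
have hag : forall a b, fdom t a -> fdom t b -> fdom s a -> fdom s b -> fdom r a -> fdom r b ->
     fval s a b = fval r a b.
  move=> a b ta tb sa sb ra rb; have := Eval a b.
  by rewrite !add_in // => /addrI.
have [Bt|nBt] := pselect (B t).
  have ft := Vt.2.2 Bt.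
  rewrite ft !setTI in Edom.
  apply: form_eq => // a b.
  have [[sa sb]|h] := pselect (fdom s a /\ fdom s b).
    by apply: hag; rewrite ?ft -?Edom.
  by rewrite (@out_dom _ _ ip s a b Vs.1) // (@out_dom _ _ ip r a b Vr.1) // -Edom.
apply: (cancel_core Vt Vs Vr) => //.
  by case: dts => [//|[Bs|Ets]]; [left|right].
by case: dtr => [//|[Br|Etr]]; [left|right].
Qed.

Lemma posv t s : Vf ip t -> Vf ip s -> form_add t s = zero_form V ->
  t = zero_form V /\ s = zero_form V.
Proof.
move=> [ht [pt _]] [hs [ps _]] E.
have Edom : fdom t `&` fdom s = setT by have := congr1 (@fdom R V) E.
have ft : fdom t = setT.
  apply/funext => x; apply/propext; split => // _.
  have : (fdom t `&` fdom s) x by rewrite Edom.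
  by case.
have fs : fdom s = setT.
  apply/funext => x; apply/propext; split => // _.
  have : (fdom t `&` fdom s) x by rewrite Edom.
  by case.
have Eval : forall a b, fval t a b + fval s a b = 0.
  move=> a b; have h : fval (form_add t s) a b = fval (zero_form V) a b by rewrite E.
  by rewrite add_in ?ft ?fs // in h.
have dt : forall a, fval t a a = 0.
  move=> a; apply: (padd_eq0l _ _ (Eval a a)); [apply: pt|apply: ps]; by rewrite ?ft ?fs.
have ds : forall a, fval s a a = 0.
  by move=> a; have := Eval a a; rewrite dt add0r.
split; apply: form_eq => //= a b.
  exact: (sq_polar (form_sesq ht ft) dt).
exact: (sq_polar (form_sesq hs fs) ds).
Qed.

End Main.

Theorem theorem4p5 (R : realType) (V : lmodType R[i]) (ip : V -> V -> R[i])
  (hH : inf_dim_complex_hilbert ip) :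
  gen_effect_algebra (Vf ip) (oplus_defined ip) (@form_add R V)
    (zero_form V).
Proof.
case: hH => hip _.
split; first exact: zero_Vf.
split; first by move=> x y Vx Vy d; apply: closure.
split; first by move=> x y _ _ d; split; [apply: dd_sym|apply: form_addC].
split.
  move=> x y z Vx Vy Vz [[h1 h2]|[h1 h2]].
    have [h3 h4] := assoc1 Vx Vy Vz h1 h2.
    by do !split => //; apply: form_addA.
  have h2' : oplus_defined ip (form_add z y) x by rewrite form_addC; apply: dd_sym.
  have [h3 h4] := assoc1 Vz Vy Vx (dd_sym h1) h2'.
  do !split => //; last exact: form_addA.
  - exact: dd_sym.
  - by rewrite form_addC; apply: dd_sym.
split.
  move=> x Vx; split; first by right; left; apply: bounded_zero.
  exact: add_zero Vx.1.
split.
  by move=> x y z Vx Vy Vz dxy dxz E; apply: (cancel hip Vx Vy Vz).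
move=> x y Vx Vy _ E; exact: (posv Vx Vy E).
Qed.
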